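(* Let $(\mathfrak{g}_\sigma,\mathfrak{q})$ be a $CR$-algebra and let $Z\in\sigma(\mathfrak{q})\setminus\mathfrak{q}$ have finite Levi-order $k$. Let $(Z_1,\dots,Z_k)$ be a Levi-sequence for $Z$ of minimal length $k$. Then: (i) $Z_i\in\mathfrak{q}\setminus\sigma(\mathfrak{q})$ for $1\le i\le k$; (ii) if $k>1$, then $[Z,Z_i]\in(\mathfrak{q}+\sigma(\mathfrak{q}))\setminus\mathfrak{q}$ for every $i$; (iii) for every permutation $(i_1,\dots,i_k)$ of $(1,\dots,k)$, the sequence $(Z_{i_1},\dots,Z_{i_k})$ is again a Levi-sequence for $Z$.
   Context: $\mathfrak{g}$ is a finite-dimensional complex Lie algebra, $\sigma$ an anti-$\mathbb{C}$-linear involution of $\mathfrak{g}$, $\mathfrak{g}_\sigma$ its fixed point set (a real form of $\mathfrak{g}$). A $CR$-algebra is a pair $(\mathfrak{g}_\sigma,\mathfrak{q})$ with $\mathfrak{q}$ a complex Lie subalgebra of $\mathfrak{g}$. Higher order commutators are defined recursively by $[X_1,\dots,X_{h-1},X_h]=[[X_1,\dots,X_{h-1}],X_h]$. For $Z\in\sigma(\mathfrak{q})\setminus\mathfrak{q}$, a Levi-sequence for $Z$ is a finite sequence $(Z_1,\dots,Z_k)$ of elements of $\mathfrak{q}$ with $[Z,Z_1,\dots,Z_k]\notin\mathfrak{q}+\sigma(\mathfrak{q})$; $Z$ has finite Levi-order if it admits a Levi-sequence, and its Levi-order is the minimal length of its Levi-sequences. *)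

(* Defs.v *)
From HB Require Import structures.
From mathcomp Require Import all_boot all_order all_algebra.
From mathcomp Require Import complex.
From mathcomp Require Import reals.
Set Implicit Arguments. Unset Strict Implicit. Unset Printing Implicit Defensive.
Import Order.TTheory GRing.Theory Num.Theory.
Local Open Scope ring_scope.

Section CRalg.
Variables (C : fieldType) (V : lmodType C).

Definition is_lie_bracket (br : V -> V -> V) : Prop :=
  [/\ (forall (a : C) x y z, br (a *: x + y) z = a *: br x z + br y z),
      (forall (a : C) x y z, br x (a *: y + z) = a *: br x y + br x z),
      (forall x, br x x = 0) &
      (forall x y z, br x (br y z) + br y (br z x) + br z (br x y) = 0)].

Definition is_antilinear_involution (conj : C -> C) (br : V -> V -> V)
    (sigma : V -> V) : Prop :=
  [/\ (forall x y, sigma (x + y) = sigma x + sigma y),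
      (forall (a : C) x, sigma (a *: x) = conj a *: sigma x),
      (forall x, sigma (sigma x) = x) &
      (forall x y, sigma (br x y) = br (sigma x) (sigma y))].

Definition is_lie_subalgebra (br : V -> V -> V) (q : {pred V}) : Prop :=
  [/\ 0 \in q,
      (forall (a : C) x y, x \in q -> y \in q -> a *: x + y \in q) &
      (forall x y, x \in q -> y \in q -> br x y \in q)].

Definition in_sigma (sigma : V -> V) (q : {pred V}) (x : V) : Prop :=
  exists2 y, y \in q & x = sigma y.

Definition in_q_plus_sq (sigma : V -> V) (q : {pred V}) (x : V) : Prop :=
  exists a b, [/\ a \in q, in_sigma sigma q b & x = a + b].

(* iterated commutator [Z, Z_1, ..., Z_k] = [[...[Z, Z_1], ...], Z_k] *)
Definition iter_br (br : V -> V -> V) (Z : V) (s : seq V) : V := foldl br Z s.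

Definition levi_seq (br : V -> V -> V) (sigma : V -> V) (q : {pred V})
    (Z : V) (s : seq V) : Prop :=
  (forall W, W \in s -> W \in q) /\ ~ in_q_plus_sq sigma q (iter_br br Z s).

Definition levi_order (br : V -> V -> V) (sigma : V -> V) (q : {pred V})
    (Z : V) (k : nat) : Prop :=
  (exists s, levi_seq br sigma q Z s /\ size s = k) /\
  (forall s, levi_seq br sigma q Z s -> (k <= size s)%N).

End CRalg.

(* Main.v *)
Require Import Defs.
From HB Require Import structures.
From mathcomp Require Import all_boot all_order all_algebra.
From mathcomp Require Import complex.
From mathcomp Require Import reals.
From Stdlib Require Import Classical_Prop.
Import Order.TTheory GRing.Theory Num.Theory.
Local Open Scope ring_scope.
Set Implicit Arguments. Unset Strict Implicit.

Section Pf.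
Variables (C : fieldType) (V : lmodType C) (cj : C -> C) (br : V -> V -> V)
  (sigma : V -> V) (q : {pred V}).
Hypotheses (Hbr : is_lie_bracket br) (Hsigma : is_antilinear_involution cj br sigma)
  (Hq : is_lie_subalgebra br q).

Local Notation A := (in_q_plus_sq sigma q).
Local Notation iter := (iter_br br).

Lemma zero_of (b : V) : b = b + b -> b = 0.
Proof. by move=> h; have := congr1 (fun t => t - b) h; rewrite addrK subrr. Qed.

Lemma brDl x y z : br (x + y) z = br x z + br y z.
Proof. by case: Hbr => H1 _ _ _; have := H1 1 x y z; rewrite !scale1r. Qed.
Lemma brDr x y z : br z (x + y) = br z x + br z y.
Proof. by case: Hbr => _ H1 _ _; have := H1 1 z x y; rewrite !scale1r. Qed.
Lemma br0l z : br 0 z = 0.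
Proof. by apply: zero_of; rewrite -brDl addr0. Qed.
Lemma brNl x z : br (- x) z = - br x z.
Proof. by case: Hbr => H1 _ _ _; have := H1 (-1) x 0 z; rewrite br0l !addr0 !scaleN1r. Qed.
Lemma brC x y : br x y = - br y x.
Proof.
case: Hbr => _ _ H3 _; have := H3 (x + y); rewrite brDl !brDr !H3 add0r addr0.
by move/eqP; rewrite addr_eq0 => /eqP.
Qed.
Lemma jac W x y : br (br W x) y - br (br W y) x = br W (br x y).
Proof.
case: Hbr => _ _ _ H4; have := H4 W x y.
rewrite (brC x (br y W)) (brC y W) brNl opprK (brC y (br W x)).
move=> h; apply/eqP; rewrite eq_sym -subr_eq0 -h; apply/eqP.
by rewrite opprB addrA.
Qed.

Lemma iterD x y r : iter (x + y) r = iter x r + iter y r.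
Proof. by elim: r x y => //= a r IH x y; rewrite /iter_br /= brDl; apply: IH. Qed.
Lemma iterN x r : iter (- x) r = - iter x r.
Proof. by elim: r x => //= a r IH x; rewrite /iter_br /= brNl; apply: IH. Qed.
Lemma iterB x y r : iter (x - y) r = iter x r - iter y r.
Proof. by rewrite iterD iterN. Qed.

Lemma q0 : 0 \in q. Proof. by case: Hq. Qed.
Lemma qD x y : x \in q -> y \in q -> x + y \in q.
Proof. by case: Hq => _ H _ hx hy; have := H 1 x y hx hy; rewrite scale1r. Qed.
Lemma qN x : x \in q -> - x \in q.
Proof. by case: Hq => H0 H _ hx; have := H (-1) x 0 hx H0; rewrite addr0 scaleN1r. Qed.
Lemma qbr x y : x \in q -> y \in q -> br x y \in q.
Proof. by case: Hq => _ _; apply. Qed.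
Lemma iter_q x r : x \in q -> (forall w, w \in r -> w \in q) -> iter x r \in q.
Proof.
elim: r x => //= a r IH x hx hr; rewrite /iter_br /=; apply: IH.
  by apply: qbr => //; apply: hr; rewrite mem_head.
by move=> w hw; apply: hr; rewrite inE hw orbT.
Qed.

Lemma sigD x y : sigma (x + y) = sigma x + sigma y. Proof. by case: Hsigma. Qed.
Lemma sig0 : sigma 0 = 0. Proof. by apply: zero_of; rewrite -sigD addr0. Qed.
Lemma sigN x : sigma (- x) = - sigma x.
Proof. by apply/eqP; rewrite -addr_eq0 -sigD addNr sig0. Qed.

Lemma AD x y : A x -> A y -> A (x + y).
Proof.
move=> [a [b [ha [b' hb' ->] ->]]] [c [d [hc [d' hd' ->] ->]]].
exists (a + c), (sigma (b' + d')); split; first by apply: qD.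
  by exists (b' + d') => //; apply: qD.
by rewrite sigD addrACA.
Qed.
Lemma AN x : A x -> A (- x).
Proof.
move=> [a [b [ha [b' hb' ->] ->]]]; exists (- a), (sigma (- b')); split.
- by apply: qN.
- by exists (- b') => //; apply: qN.
- by rewrite sigN opprD.
Qed.
Lemma AB x y : A x -> A y -> A (x - y).
Proof. by move=> hx hy; apply: AD => //; apply: AN. Qed.
Lemma Aq x : x \in q -> A x.
Proof. by move=> h; exists x, 0; split => //; [exists 0; rewrite ?sig0 //; apply: q0 | rewrite addr0]. Qed.
Lemma As x : in_sigma sigma q x -> A x.
Proof. by move=> h; exists 0, x; split => //; [apply: q0 | rewrite add0r]. Qed.
Lemma A_br W X : A W -> X \in q -> in_sigma sigma q X -> A (br W X).
Proof.
move=> [a [b [ha [b' hb' ->] ->]]] hX [y hy eX]; rewrite brDl; apply: AD.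
  by apply: Aq; apply: qbr.
apply: As; exists (br b' y); first by apply: qbr.
by case: Hsigma => _ _ _ ->; rewrite -eX.
Qed.

Variables (Z : V) (k : nat).
Hypothesis Hk : levi_order br sigma q Z k.

Definition allq (u : seq V) := forall w, w \in u -> w \in q.

Lemma minA u : allq u -> (size u < k)%N -> A (iter Z u).
Proof.
move=> hu hs; apply: NNPP => hA; case: Hk => _ /(_ u) h.
by have := h (conj hu hA); rewrite leqNgt hs.
Qed.

Lemma allq_cat u v : allq (u ++ v) <-> allq u /\ allq v.
Proof.
split=> [h|[h1 h2]]; first by split=> w hw; apply: h; rewrite mem_cat hw ?orbT.
by move=> w; rewrite mem_cat => /orP [] ?; [apply: h1 | apply: h2].
Qed.
Lemma allq_cons x u : allq (x :: u) <-> x \in q /\ allq u.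
Proof.
split=> [h|[h1 h2]]; first by split; [apply: h; rewrite mem_head | move=> w hw; apply: h; rewrite inE hw orbT].
by move=> w; rewrite inE => /orP [/eqP ->|]; [ | apply: h2].
Qed.

Definition eqA a b := A (a - b).

Lemma eqA_refl a : eqA a a.
Proof. by rewrite /eqA subrr; apply: Aq; apply: q0. Qed.
Lemma eqA_trans a b c : eqA a b -> eqA b c -> eqA a c.
Proof. by rewrite /eqA => h1 h2; have := AD h1 h2; rewrite addrA subrK. Qed.

Lemma swap p x y r : allq (p ++ x :: y :: r) -> size (p ++ x :: y :: r) = k ->
  eqA (iter Z (p ++ x :: y :: r)) (iter Z (p ++ y :: x :: r)).
Proof.
move=> /allq_cat [hp /allq_cons [hx /allq_cons [hy hr]]] hs.
rewrite /eqA /iter_br !foldl_cat /= -/(iter _ r) -/(iter _ r) -iterB jac.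
have -> : iter (br (foldl br Z p) (br x y)) r = iter Z (p ++ br x y :: r) by rewrite /iter_br foldl_cat.
apply: minA.
  apply/allq_cat; split => //; apply/allq_cons; split => //; exact: qbr.
by move: hs; rewrite !size_cat /= => <-; rewrite !addnS ltnS.
Qed.

Lemma move_x u2 p x u3 : allq (p ++ x :: u2 ++ u3) -> size (p ++ x :: u2 ++ u3) = k ->
  eqA (iter Z (p ++ x :: u2 ++ u3)) (iter Z (p ++ u2 ++ x :: u3)).
Proof.
elim: u2 p => [|y u2 IH] p ha hs /=; first exact: eqA_refl.
apply: (eqA_trans (swap ha hs)).
have := IH (rcons p y); rewrite !cat_rcons; apply.
- move: ha; rewrite !allq_cat !allq_cons !allq_cat => -[? [? [? ?]]].
  by split => //; split => //; split.
- by move: hs; rewrite !size_cat /= !addnS.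
Qed.

Lemma perm_x u p u' : perm_eq u u' -> allq (p ++ u) -> size (p ++ u) = k ->
  eqA (iter Z (p ++ u)) (iter Z (p ++ u')).
Proof.
elim: u p u' => [|x u1 IH] p u' hp ha hs.
  by move: (perm_size hp) => /= /esym /size0nil ->; exact: eqA_refl.
have hx : x \in u' by rewrite -(perm_mem hp) mem_head.
move: hp; case/splitPr: hx => u2 u3 hp.
have hp1 : perm_eq u1 (u2 ++ u3).
  by rewrite -(perm_cons x); apply: (perm_trans hp); apply/permPl; exact: (perm_catCA u2 [:: x] u3).
have := IH (rcons p x) _ hp1; rewrite !cat_rcons => h.
apply: (eqA_trans (h ha hs)); apply: move_x.
  move: ha; rewrite !allq_cat !allq_cons => -[h1 [h2 h3]]; split => //; split => //.
  by move=> w; rewrite -(perm_mem hp1); apply: h3.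
by move: hs; rewrite !size_cat /= (perm_size hp1).
Qed.


Lemma perm_r (u1 u2 : seq V) x : perm_eq (rcons (u1 ++ u2) x) (u1 ++ x :: u2).
Proof. by rewrite -cats1 -catA perm_cat2l perm_catC. Qed.
Lemma perm_l (u1 u2 : seq V) x : perm_eq (x :: u1 ++ u2) (u1 ++ x :: u2).
Proof. by rewrite perm_sym; apply/permPl; exact: (perm_catCA u1 [:: x] u2). Qed.

Lemma main (s : seq V) (Hs : levi_seq br sigma q Z s) (Hsize : size s = k) :
  [/\ (forall i, (i < k)%N -> s`_i \in q /\ ~ in_sigma sigma q s`_i),
      ((1 < k)%N -> forall i, (i < k)%N ->
         in_q_plus_sq sigma q (br Z s`_i) /\ br Z s`_i \notin q) &
      (forall t : seq V, perm_eq t s -> levi_seq br sigma q Z t)].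
Proof.
case: Hs => Hsq HsA.
have P3 : forall t, perm_eq t s -> levi_seq br sigma q Z t.
  move=> t ht; split; first by move=> w; rewrite (perm_mem ht); apply: Hsq.
  move=> hA; apply: HsA.
  have := @perm_x t [::] s ht; rewrite /= => h.
  have h1 : allq t by move=> w; rewrite (perm_mem ht); apply: Hsq.
  have h' := h h1 (etrans (perm_size ht) Hsize).
  by have := AB hA h'; rewrite opprB addrC subrK.
have key : forall i, (i < k)%N -> s = take i s ++ s`_i :: drop i.+1 s.
  by move=> i hi; rewrite -drop_nth ?cat_take_drop // Hsize.
have memi : forall i, (i < k)%N -> s`_i \in q.
  by move=> i hi; apply: Hsq; apply: mem_nth; rewrite Hsize.
have allu : forall i, (i < k)%N -> allq (take i s ++ drop i.+1 s).
  move=> i hi w; rewrite mem_cat => /orP [] hw; apply: Hsq.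
    exact: (mem_take hw).
  exact: (mem_drop hw).
split => //.
- move=> i hi; split; first exact: memi.
  move=> hsig.
  have hp := perm_r (take i s) (drop i.+1 s) s`_i; rewrite -key // in hp.
  case: (P3 _ hp) => _; apply.
  rewrite /iter_br foldl_rcons -/(iter Z _); apply: A_br => //; last exact: memi.
  apply: minA; first exact: allu.
  by have := perm_size hp; rewrite size_rcons Hsize => <-.
- move=> hk i hi; split.
    apply: (minA (u := [:: s`_i])) => //.
    by move=> w; rewrite inE => /eqP ->; apply: memi.
  apply/negP => hq.
  have hp := perm_l (take i s) (drop i.+1 s) s`_i; rewrite -key // in hp.
  case: (P3 _ hp) => _; apply.
  by apply: Aq; rewrite /iter_br /=; apply: iter_q => //; exact: (allu i hi).
Qed.

End Pf.

Theorem lemma3p8 (R : realType) (V : vectType R[i])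
    (br : V -> V -> V) (sigma : V -> V) (q : {pred V})
    (Hbr : is_lie_bracket br)
    (Hsigma : is_antilinear_involution (@conjc R) br sigma)
    (Hq : is_lie_subalgebra br q)
    (Z : V) (HZs : in_sigma sigma q Z) (HZq : Z \notin q)
    (k : nat) (Hk : levi_order br sigma q Z k)
    (s : seq V) (Hs : levi_seq br sigma q Z s) (Hsize : size s = k) :
  [/\ (forall i, (i < k)%N -> s`_i \in q /\ ~ in_sigma sigma q s`_i),
      ((1 < k)%N -> forall i, (i < k)%N ->
         in_q_plus_sq sigma q (br Z s`_i) /\ br Z s`_i \notin q) &
      (forall t : seq V, perm_eq t s -> levi_seq br sigma q Z t)].
Proof. exact: (main Hbr Hsigma Hq Hk Hs Hsize). Qed.
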